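(* Let $G$ be a finite group, $I$ a set, and $H=G^I$. Suppose that $f(a,b)=b$ for some $a,b\in G$ and some homogeneous monomial $f:G^2\to G$, and let $N$ be the normal subgroup of $G$ generated by $b$. Let $(X_m)_{m\in\mathbf{N}}$ be an increasing sequence of subsets of $H$ such that $\mathcal{G}(X_m)\subseteq X_{m+1}$ for all $m$ and $\bigcup_m X_m=H$. Then $N^I\subseteq X_m$ for all $m$ large enough.
   Context: For a subset $X$ of a group, $\mathcal{G}(X)=X\cup\{1\}\cup\{x^{-1}: x\in X\}\cup\{xy : x,y\in X\}$. For $n\in\mathbf{N}$, the set of functions $G^n\to G$ is a group under pointwise multiplication; its elements lying in the subgroup generated by the constant functions and the coordinate projections are called monomials. A monomial $m$ is homogeneous if $m(g_1,\dots,g_n)=1$ whenever at least one $g_i$ equals $1$. *)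

(* Defs.v *)
From HB Require Import structures.
From mathcomp Require Import all_boot all_fingroup.
Set Implicit Arguments. Unset Strict Implicit. Unset Printing Implicit Defensive.
Local Open Scope group_scope.

Inductive monomial (gT : finGroupType) (n : nat) :
    ({ffun 'I_n -> gT} -> gT) -> Prop :=
| mon_const (c : gT) : monomial (fun _ => c)
| mon_proj (i : 'I_n) : monomial (fun g => g i)
| mon_mul f1 f2 : monomial f1 -> monomial f2 -> monomial (fun g => f1 g * f2 g)
| mon_inv f : monomial f -> monomial (fun g => (f g)^-1)
| mon_ext f1 f2 : monomial f1 -> (forall g, f1 g = f2 g) -> monomial f2.

Definition homogeneous (gT : finGroupType) (n : nat)
    (m : {ffun 'I_n -> gT} -> gT) : Prop :=
  forall g : {ffun 'I_n -> gT}, (exists i, g i = 1) -> m g = 1.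

Definition pair2 (gT : finGroupType) (a b : gT) : {ffun 'I_2 -> gT} :=
  [ffun i : 'I_2 => if val i == 0%N then a else b].

Definition calG (gT : finGroupType) (I : Type) (X : (I -> gT) -> Prop)
    : (I -> gT) -> Prop :=
  fun h => X h
        \/ (forall i, h i = 1)
        \/ (exists x, X x /\ forall i, h i = (x i)^-1)
        \/ (exists x y, X x /\ X y /\ forall i, h i = x i * y i).

(* Main.v *)
Require Import Defs.
From mathcomp Require Import all_boot all_fingroup.
From Stdlib Require Import ClassicalEpsilon FunctionalExtensionality.
Set Implicit Arguments. Unset Strict Implicit. Unset Printing Implicit Defensive.
Local Open Scope group_scope.
From Stdlib Require Import Classical.

Lemma Xmono (gT : finGroupType) (I : Type) (X : nat -> (I -> gT) -> Prop) :
  (forall m h, X m h -> X m.+1 h) ->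
  forall m n h, (m <= n)%N -> X m h -> X n h.
Proof.
move=> hs m n h /subnK <-; elim: (n - m)%N => [|k IH] //= Xh.
by rewrite addSn; apply: hs; apply: IH.
Qed.

Lemma Xmul (gT : finGroupType) (I : Type) (X : nat -> (I -> gT) -> Prop) :
  (forall m h, calG (X m) h -> X m.+1 h) ->
  forall m x y, X m x -> X m y -> X m.+1 (fun i => x i * y i).
Proof. by move=> hc m x y Xx Xy; apply: hc; right; right; right; exists x, y. Qed.

Lemma Xinv (gT : finGroupType) (I : Type) (X : nat -> (I -> gT) -> Prop) :
  (forall m h, calG (X m) h -> X m.+1 h) ->
  forall m x, X m x -> X m.+1 (fun i => (x i)^-1).
Proof. by move=> hc m x Xx; apply: hc; right; right; left; exists x. Qed.

Lemma Xone (gT : finGroupType) (I : Type) (X : nat -> (I -> gT) -> Prop) :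
  (forall m h, calG (X m) h -> X m.+1 h) ->
  forall h, (forall i, h i = 1) -> X 1%N h.
Proof. by move=> hc h H; apply: hc; right; left. Qed.

Lemma Xmon (gT : finGroupType) (I : Type) (X : nat -> (I -> gT) -> Prop)
  (f : {ffun 'I_2 -> gT} -> gT) :
  (forall m h, X m h -> X m.+1 h) ->
  (forall m h, calG (X m) h -> X m.+1 h) ->
  (forall h : I -> gT, exists m, X m h) ->
  monomial f -> forall m, exists m', forall u v, X m u -> X m v ->
    X m' (fun i => f (pair2 (u i) (v i))).
Proof.
move=> hs hc hex; elim=> {f}.
- by move=> c m; have [m' H] := hex (fun _ => c); exists m'.
- move=> j m; exists m => u v Xu Xv.
  have -> : (fun i => pair2 (u i) (v i) j) = if val j == 0%N then u else v.
    by apply: functional_extensionality => i; rewrite ffunE; case: (_ == _).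
  by case: (_ == _).
- move=> f1 f2 _ IH1 _ IH2 m.
  have [m1 H1] := IH1 m; have [m2 H2] := IH2 m.
  exists (maxn m1 m2).+1 => u v Xu Xv; apply: Xmul => //.
    by apply: Xmono (H1 _ _ Xu Xv); rewrite // leq_maxl.
  by apply: Xmono (H2 _ _ Xu Xv); rewrite // leq_maxr.
- move=> f1 _ IH m; have [m1 H1] := IH m; exists m1.+1 => u v Xu Xv.
  exact: Xinv (H1 _ _ Xu Xv).
- move=> f1 f2 _ IH E m; have [m1 H1] := IH m; exists m1 => u v Xu Xv.
  have <- : (fun i => f1 (pair2 (u i) (v i))) = (fun i => f2 (pair2 (u i) (v i))).
    by apply: functional_extensionality => i; rewrite E.
  exact: H1.
Qed.

Definition pb (P : Prop) : bool := if excluded_middle_informative P then true else false.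
Lemma pbP (P : Prop) : pb P <-> P.
Proof. by rewrite /pb; case: excluded_middle_informative. Qed.

Definition eS (gT : finGroupType) (I : Type) (b : gT) (S : I -> bool) : I -> gT :=
  fun i => if S i then b else 1.

Definition HX (gT : finGroupType) (I : Type) (X : nat -> (I -> gT) -> Prop) :=
  [/\ (forall m h, X m h -> X m.+1 h), (forall m h, calG (X m) h -> X m.+1 h)
    & (forall h : I -> gT, exists m, X m h)].

Definition HF (gT : finGroupType) (f : {ffun 'I_2 -> gT} -> gT) (a b : gT) :=
  [/\ monomial f, homogeneous f & f (pair2 a b) = b].

Lemma Xext (gT : finGroupType) (I : Type) (X : nat -> (I -> gT) -> Prop) m h1 h2 :
  X m h1 -> (forall i, h1 i = h2 i) -> X m h2.
Proof. by move=> Xh E; have <- : h1 = h2 by apply: functional_extensionality. Qed.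

Lemma Fcap (gT : finGroupType) (I : Type) (f : {ffun 'I_2 -> gT} -> gT) a b
  (T S : I -> bool) : HF f a b -> forall i,
  f (pair2 (eS a T i) (eS b S i)) = eS b (fun i => T i && S i) i.
Proof.
case=> _ hom fab i; rewrite /eS.
case: (T i) => /=; case: (S i) => //.
- by apply: hom; exists (@Ordinal 2 1 isT); rewrite ffunE.
- by apply: hom; exists (@Ordinal 2 0 isT); rewrite ffunE.
- by apply: hom; exists (@Ordinal 2 0 isT); rewrite ffunE.
Qed.

Definition bad (gT : finGroupType) (I : Type) (X : nat -> (I -> gT) -> Prop) b
  (S : I -> bool) := forall M, exists R : I -> bool, (forall i, R i -> S i) /\ ~ X M (eS b R).
Definition good (gT : finGroupType) (I : Type) (X : nat -> (I -> gT) -> Prop) b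
  (S : I -> bool) := exists M, forall R : I -> bool, (forall i, R i -> S i) -> X M (eS b R).

Lemma notgood_bad (gT : finGroupType) (I : Type) (X : nat -> (I -> gT) -> Prop) b S :
  ~ good X b S -> bad X b S.
Proof.
move=> ng M; apply: NNPP => nex; apply: ng; exists M => R sub.
by apply: NNPP => nX; apply: nex; exists R.
Qed.

Lemma good_notbad (gT : finGroupType) (I : Type) (X : nat -> (I -> gT) -> Prop) b S :
  good X b S -> bad X b S -> False.
Proof. by move=> [M HM] /(_ M) [R [sub nX]]; apply: nX; apply: HM. Qed.

Lemma choiceN (A : Type) (P : nat -> A -> Prop) :
  (forall n, exists x, P n x) -> exists g : nat -> A, forall n, P n (g n).
Proof.
move=> H; exists (fun n => proj1_sig (constructive_indefinite_description _ (H n))).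
by move=> n; case: constructive_indefinite_description.
Qed.

Lemma lemmaA (gT : finGroupType) (I : Type) (X : nat -> (I -> gT) -> Prop)
  (f : {ffun 'I_2 -> gT} -> gT) a b :
  HX X -> HF f a b -> forall D : nat -> I -> bool,
  (forall n m i, n <> m -> D n i -> D m i -> False) ->
  (forall n, bad X b (D n)) -> False.
Proof.
move=> [hs hc hex] hF D disj Dbad.
have hmon : monomial f by case: hF.
have [q Hq] : exists q : nat -> nat, forall n, X (q n) (eS a (D n)).
  by apply: (@choiceN nat (fun n m => X m (eS a (D n)))) => n; exact: hex.
have [phi Hphi] : exists phi : nat -> nat, forall n u v, X (q n + n)%N u -> X (q n + n)%N v ->
    X (phi n) (fun i => f (pair2 (u i) (v i))).
  apply: (@choiceN nat (fun n m' => forall u v, X (q n + n)%N u -> X (q n + n)%N v ->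
    X m' (fun i => f (pair2 (u i) (v i))))) => n.
  exact: (Xmon hs hc hex hmon (q n + n)%N).
have [R HR] : exists R : nat -> I -> bool, forall n, (forall i, R n i -> D n i) /\ ~ X (phi n) (eS b (R n)).
  apply: (@choiceN (I -> bool) (fun n R => (forall i, R i -> D n i) /\ ~ X (phi n) (eS b R))) => n.
  exact: (Dbad n (phi n)).
pose Ra i := pb (exists n, R n i).
have [p Hp] := hex (eS b Ra).
have := Hphi p (eS a (D p)) (eS b Ra).
have X1 : X (q p + p)%N (eS a (D p)) by apply: (Xmono hs) (Hq p); rewrite leq_addr.
have X2 : X (q p + p)%N (eS b Ra) by apply: (Xmono hs) Hp; rewrite leq_addl.
move=> /(_ X1 X2) H; case: (HR p) => sub; apply.
apply: Xext H _ => i; rewrite (Fcap _ _ hF) /eS.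
have -> : D p i && Ra i = R p i; last by [].
apply/idP/idP.
  case/andP=> Dpi /pbP [n Rni]; have Dni := (HR n).1 _ Rni.
  case: (n =P p) => [<- // | ne].
  by exfalso; apply: (disj n p i ne).
by move=> Rpi; rewrite sub //=; apply/pbP; exists p.
Qed.

Definition subs (I : Type) (A B : I -> bool) := forall i, A i -> B i.
Definition disj (I : Type) (A B : I -> bool) := forall i, A i -> B i -> False.

Lemma choiceT (A B : Type) (P : A -> B -> Prop) :
  (forall x, exists y, P x y) -> exists g : A -> B, forall x, P x (g x).
Proof.
move=> H; exists (fun n => proj1_sig (constructive_indefinite_description _ (H n))).
by move=> n; case: constructive_indefinite_description.
Qed.

Lemma eS_union (gT : finGroupType) (I : Type) (X : nat -> (I -> gT) -> Prop) b m
  (R1 R2 : I -> bool) : HX X ->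
  X m (eS b R1) -> X m (eS b R2) -> disj R1 R2 ->
  X m.+1 (eS b (fun i => R1 i || R2 i)).
Proof.
move=> [hs hc hex] X1 X2 dj; apply: Xext (Xmul hc X1 X2) _ => i; rewrite /eS.
case E1: (R1 i); case E2: (R2 i) => /=; rewrite ?mulg1 ?mul1g //.
by case: (dj i); rewrite ?E1 ?E2.
Qed.

Lemma good_union (gT : finGroupType) (I : Type) (X : nat -> (I -> gT) -> Prop) b
  (A A' : I -> bool) : HX X -> good X b A -> good X b A' -> good X b (fun i => A i || A' i).
Proof.
move=> hX [m1 H1] [m2 H2]; have [hs _ _] := hX.
exists (maxn m1 m2).+1 => R sub.
have -> : R = (fun i => (R i && A i) || (R i && ~~ A i)).
  by apply: functional_extensionality => i; case: (R i); case: (A i).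
apply: eS_union => //.
- apply: (Xmono hs) (H1 _ _); first exact: leq_maxl.
  by move=> i /andP[].
- apply: (Xmono hs) (H2 _ _); first exact: leq_maxr.
  by move=> i /andP[Ri nAi]; have := sub i Ri; rewrite (negbTE nAi).
- by move=> i /andP[_ ->] /andP[].
Qed.

Lemma good0 (gT : finGroupType) (I : Type) (X : nat -> (I -> gT) -> Prop) b :
  HX X -> good X b (fun _ => false).
Proof.
move=> [hs hc hex]; exists 1%N => R sub; apply: (Xone hc) => i.
by rewrite /eS; case E: (R i) => //; have := sub i; rewrite E => /(_ isT).
Qed.

Lemma step1 (gT : finGroupType) (I : Type) (X : nat -> (I -> gT) -> Prop)
  (f : {ffun 'I_2 -> gT} -> gT) a b :
  HX X -> HF f a b -> bad X b (fun _ => true) ->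
  (forall B, bad X b B -> exists A A', [/\ subs A B, subs A' B, disj A A',
      bad X b A & bad X b A']) -> False.
Proof.
move=> hX hF Ibad hsplit.
have [sp Hsp] : exists sp : (I -> bool) -> (I -> bool) * (I -> bool), forall B,
    bad X b B -> [/\ subs (sp B).1 B, subs (sp B).2 B, disj (sp B).1 (sp B).2,
      bad X b (sp B).1 & bad X b (sp B).2].
  apply: (@choiceT (I -> bool) ((I -> bool) * (I -> bool)) (fun B p =>
    bad X b B -> [/\ subs p.1 B, subs p.2 B, disj p.1 p.2,
      bad X b p.1 & bad X b p.2])) => B.
  case: (classic (bad X b B)) => [hb | nb].
    by have [A [A' H]] := hsplit B hb; exists (A, A').
  by exists (fun _ => true, fun _ => true).
pose Bs := fix Bs (n : nat) : I -> bool :=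
  if n is n'.+1 then (sp (Bs n')).2 else (fun _ => true).
have Bbad : forall n, bad X b (Bs n).
  by elim=> [|n IH] //=; case: (Hsp _ IH).
have Bdec : forall n k i, Bs (n + k)%N i -> Bs n i.
  move=> n; elim=> [|k IH] i; first by rewrite addn0.
  rewrite addnS /= => H; apply: IH; by case: (Hsp _ (Bbad (n + k)%N)) => _ s2 _ _ _; apply: s2.
have key : forall n m i, (n < m)%N -> (sp (Bs n)).1 i -> (sp (Bs m)).1 i -> False.
  move=> n m i lt D1 D2.
  have [s1m _ _ _ _] := Hsp _ (Bbad m).
  have Bm := s1m _ D2.
  have : Bs n.+1 i by rewrite -(subnKC lt) in Bm; apply: Bdec Bm.
  rewrite /=; case: (Hsp _ (Bbad n)) => _ _ dj _ _ H.
  exact: (dj i D1 H).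
apply: (lemmaA hX hF (D := fun n => (sp (Bs n)).1)); last first.
  by move=> n; case: (Hsp _ (Bbad n)).
move=> n m i ne D1 D2; case: (ltngtP n m) => l.
- exact: key l D1 D2.
- exact: key l D2 D1.
- by [].
Qed.

Lemma atom_small (gT : finGroupType) (I : Type) (X : nat -> (I -> gT) -> Prop) b
  (B : I -> bool) : HX X -> bad X b B ->
  (forall A A', subs A B -> subs A' B -> disj A A' -> bad X b A -> bad X b A' -> False) ->
  forall M, exists R, [/\ subs R B, good X b R & ~ X M (eS b R)].
Proof.
move=> hX Bb atom M; have [hs hc hex] := hX.
have [lb Hlb] := hex (eS b B).
pose M' := maxn M lb.
have [R [sub nX]] := Bb M'.+2.
case: (classic (good X b R)) => [g | ng].
  exists R; split => // XM; apply: nX; apply: (Xmono hs) XM.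
  by apply: leq_trans (leq_maxl M lb) _; rewrite leqW.
have Rb := notgood_bad ng.
have gc : good X b (fun i => B i && ~~ R i).
  apply: NNPP => ng2; apply: (atom R (fun i => B i && ~~ R i)) => //.
  - by move=> i /andP[].
  - by move=> i Ri /andP[_]; rewrite Ri.
  - exact: notgood_bad.
exists (fun i => B i && ~~ R i); split => //.
  by move=> i /andP[].
move=> XM; apply: nX.
have X1 : X M' (eS b (fun i => B i && ~~ R i)) by apply: (Xmono hs) XM; exact: leq_maxl.
have X2 : X M' (eS b B) by apply: (Xmono hs) Hlb; exact: leq_maxr.
have := Xmul hc (hs _ _ X2) (Xinv hc X1).
move/Xext; apply => i; rewrite /eS.
case E: (R i); first by rewrite (sub i E) /= invg1 mulg1.
by case: (B i) => /=; rewrite ?mulgV ?invg1 ?mulg1.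
Qed.

Lemma step2 (gT : finGroupType) (I : Type) (X : nat -> (I -> gT) -> Prop) b
  (B : I -> bool) : HX X -> bad X b B ->
  (forall A A', subs A B -> subs A' B -> disj A A' -> bad X b A -> bad X b A' -> False) ->
  False.
Proof.
move=> hX Bb atom; have [hs hc hex] := hX.
have [lvl Hlvl] : exists lvl : (I -> bool) -> nat, forall P, good X b P ->
    forall R, subs R P -> X (lvl P) (eS b R).
  apply: (@choiceT (I -> bool) nat (fun P c => good X b P ->
    forall R, subs R P -> X c (eS b R))) => P.
  case: (classic (good X b P)) => [[c Hc] | ng]; first by exists c.
  by exists 0%N.
have [ch Hch] : exists ch : (I -> bool) * nat -> I -> bool, forall p,
    [/\ subs (ch p) B, good X b (ch p) & ~ X (maxn (lvl p.1) p.2).+1 (eS b (ch p))].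
  apply: (@choiceT ((I -> bool) * nat) (I -> bool) (fun p R =>
    [/\ subs R B, good X b R & ~ X (maxn (lvl p.1) p.2).+1 (eS b R)])) => p.
  exact: atom_small.
pose Ps := fix Ps (n : nat) : I -> bool :=
  if n is n'.+1 then (fun i => Ps n' i || ch (Ps n', n') i) else (fun _ => false).
pose Rn n := ch (Ps n, n).
pose Dn n i := Rn n i && ~~ Ps n i.
have Pgood : forall n, good X b (Ps n).
  elim=> [|n IH] /=; first exact: good0.
  by apply: good_union => //; case: (Hch (Ps n, n)).
have Dbig : forall n, ~ X n (eS b (Dn n)).
  move=> n XD; case: (Hch (Ps n, n)) => _ _; apply.
  pose N := maxn (lvl (Ps n)) n.
  have X1 : X N (eS b (Dn n)) by apply: (Xmono hs) XD; exact: leq_maxr.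
  have X2 : X N (eS b (fun i => Rn n i && Ps n i)).
    apply: (Xmono hs) (Hlvl _ (Pgood n) _ _); first exact: leq_maxl.
    by move=> i /andP[].
  apply: Xext (eS_union hX X1 X2 _) _.
    by move=> i /andP[_ /negbTE ->] /andP[].
  move=> i; rewrite /eS /Dn /Rn /=; case: (ch (Ps n, n) i); case: (Ps n i) => //=.
have Pinc : forall n k i, Ps n i -> Ps (n + k)%N i.
  move=> n; elim=> [|k IH] i; first by rewrite addn0.
  by rewrite addnS /= => /IH ->.
have key : forall n m i, (n < m)%N -> Dn n i -> Dn m i -> False.
  move=> n m i lt /andP[Rni _] /andP[_ nP].
  have : Ps n.+1 i by rewrite /= -/(Rn n) Rni orbT.
  move/(Pinc _ (m - n.+1)%N); rewrite subnKC // => P.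
  by rewrite P in nP.
have Ddisj : forall n m i, n <> m -> Dn n i -> Dn m i -> False.
  move=> n m i ne D1 D2; case: (ltngtP n m) => l.
  - exact: key l D1 D2.
  - exact: key l D2 D1.
  - by [].
have DsubB : forall n, subs (Dn n) B.
  by move=> n i /andP[Ri _]; case: (Hch (Ps n, n)) => s _ _; apply: s.
have gp : forall (par : bool), good X b (fun i => pb (exists n, odd n = par /\ Dn n i)) -> False.
  move=> par [L HL]; pose n := (L.*2 + par)%N.
  apply: (Dbig n); apply: (Xmono hs) (HL _ _).
    by rewrite /n -addnn -addnA leq_addr.
  move=> i Di; apply/pbP; exists n; split => //.
  by rewrite /n oddD odd_double /=; case: (par).
apply: (atom (fun i => pb (exists n, odd n = false /\ Dn n i))
             (fun i => pb (exists n, odd n = true /\ Dn n i))).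
- by move=> i /pbP [n [_ D]]; apply: DsubB D.
- by move=> i /pbP [n [_ D]]; apply: DsubB D.
- move=> i /pbP [n [pn Dn1]] /pbP [m [pm Dm]]; apply: (Ddisj n m i) => // e.
  by rewrite e pm in pn.
- by apply: notgood_bad => g; apply: (gp false).
- by apply: notgood_bad => g; apply: (gp true).
Qed.

Lemma core (gT : finGroupType) (I : Type) (X : nat -> (I -> gT) -> Prop)
  (f : {ffun 'I_2 -> gT} -> gT) a b :
  HX X -> HF f a b -> good X b (fun _ => true).
Proof.
move=> hX hF; apply: NNPP => ng; have Ib := notgood_bad ng.
case: (classic (forall B, bad X b B -> exists A A', [/\ subs A B, subs A' B, disj A A',
      bad X b A & bad X b A'])) => [hs | nhs].
  exact: (step1 hX hF Ib hs).
have [B HB] := not_all_ex_not _ _ nhs.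
have Bb : bad X b B by apply: NNPP => nb; apply: HB => /nb.
apply: (step2 hX Bb) => A A' sA sA' dj bA bA'; apply: HB => _.
by exists A, A'; split.
Qed.

Definition goodK (gT : finGroupType) (I : Type) (X : nat -> (I -> gT) -> Prop)
  (K : {set gT}) := exists m, forall h : I -> gT, (forall i, h i \in K) -> X m h.

Lemma Xmul2 (gT : finGroupType) (I : Type) (X : nat -> (I -> gT) -> Prop) m1 m2 x y :
  HX X -> X m1 x -> X m2 y -> X (maxn m1 m2).+1 (fun i => x i * y i).
Proof.
move=> [hs hc _] X1 X2; apply: (Xmul hc).
  by apply: (Xmono hs) X1; exact: leq_maxl.
by apply: (Xmono hs) X2; exact: leq_maxr.
Qed.

Lemma goodK_mul (gT : finGroupType) (I : Type) (X : nat -> (I -> gT) -> Prop) K1 K2 :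
  HX X -> goodK X K1 -> goodK X K2 -> goodK X (K1 * K2).
Proof.
move=> hX [m1 H1] [m2 H2]; exists (maxn m1 m2).+1 => h Hh.
pose h1 i := odflt 1 [pick x in K1 | x^-1 * h i \in K2].
have P i : h1 i \in K1 /\ (h1 i)^-1 * h i \in K2.
  rewrite /h1; case: pickP => [x /andP[] //|none].
  case/mulsgP: (Hh i) => x y xK yK e.
  by have := none x; rewrite xK e mulKg yK.
apply: Xext (Xmul2 hX (H1 h1 (fun i => (P i).1)) (H2 (fun i => (h1 i)^-1 * h i) (fun i => (P i).2))) _.
by move=> i; rewrite mulKVg.
Qed.

Lemma goodK_one (gT : finGroupType) (I : Type) (X : nat -> (I -> gT) -> Prop) :
  HX X -> goodK X [set 1].
Proof.
move=> [hs hc hex]; exists 1%N => h Hh; apply: (Xone hc) => i.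
by have := Hh i; rewrite inE => /eqP.
Qed.

Lemma goodK_sub (gT : finGroupType) (I : Type) (X : nat -> (I -> gT) -> Prop) (K K' : {set gT}) :
  K' \subset K -> goodK X K -> goodK X K'.
Proof. by move=> sK [m H]; exists m => h Hh; apply: H => i; apply: (subsetP sK). Qed.

Lemma goodK_exp (gT : finGroupType) (I : Type) (X : nat -> (I -> gT) -> Prop) K :
  HX X -> goodK X K -> forall n, goodK X (K ^+ n).
Proof.
move=> hX gK; elim=> [|n IH]; first exact: goodK_one.
by rewrite expgS; apply: goodK_mul.
Qed.

Lemma goodK_conj (gT : finGroupType) (I : Type) (X : nat -> (I -> gT) -> Prop) b g :
  HX X -> (exists Me, forall S, X Me (eS b S)) -> goodK X [set 1; b ^ g].
Proof.
move=> hX [Me HMe]; have [hs hc hex] := hX.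
have [l1 H1] := hex (fun _ => g^-1); have [l2 H2] := hex (fun _ => g).
exists (maxn (maxn l1 Me).+1 l2).+1 => h Hh.
pose S i := h i != 1.
have := Xmul2 hX (Xmul2 hX H1 (HMe S)) H2.
move/Xext; apply=> i; rewrite /eS /S.
have := Hh i; rewrite !inE; case/orP => /eqP ->.
  by rewrite eqxx /= mulg1 mulVg.
case: eqP => [E|_]; last by rewrite /conjg mulgA.
by rewrite E /= mulg1 mulVg.
Qed.

Lemma goodK_list (gT : finGroupType) (I : Type) (X : nat -> (I -> gT) -> Prop) b :
  HX X -> (exists Me, forall S, X Me (eS b S)) -> forall s : seq gT,
  goodK X [set x | (x == 1) || has (fun g => x == b ^ g) s].
Proof.
move=> hX hE; elim=> [|g s IH].
  apply: goodK_sub (goodK_one hX).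
  by apply/subsetP => x; rewrite !inE orbF.
apply: goodK_sub (goodK_mul hX (goodK_conj g hX hE) IH).
have one_s : (1 : gT) \in [set x | (x == 1) || has (fun g => x == b ^ g) s].
  by rewrite inE eqxx.
apply/subsetP => x; rewrite inE /= => /orP[/eqP->|/orP[/eqP->|hs]].
- by apply/mulsgP; exists 1 1; rewrite ?inE ?eqxx ?mulg1.
- by apply/mulsgP; exists (b ^ g) 1; rewrite ?inE ?eqxx ?orbT ?mulg1.
- by apply/mulsgP; exists 1 x; rewrite ?inE ?eqxx ?hs ?orbT ?mul1g.
Qed.

Unset Implicit Arguments.

Theorem mainTheorem8 (gT : finGroupType) (I : Type)
  (f : {ffun 'I_2 -> gT} -> gT) (a b : gT)
  (X : nat -> (I -> gT) -> Prop) :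
  monomial f -> homogeneous f -> f (pair2 a b) = b ->
  (forall m h, X m h -> X m.+1 h) ->
  (forall m h, calG (X m) h -> X m.+1 h) ->
  (forall h : I -> gT, exists m, X m h) ->
  exists M : nat, forall m, (M <= m)%N ->
    forall h : I -> gT, (forall i, h i \in <<b ^: [set: gT]>>) -> X m h.
Proof.
move=> hm hh hab hs hc hex.
have hX : HX X by split.
have hF : HF f a b by split.
have hE : exists Me, forall S, X Me (eS b S).
  have [Me HMe] := core hX hF; exists Me => S; exact: HMe.
have gL := goodK_list hX hE (enum gT).
have [n En] := gen_expgs (b ^: [set: gT]).
have [M HM] : goodK X <<b ^: [set: gT]>>.
  rewrite En; apply: goodK_exp => //; apply: goodK_sub gL.
  apply/subsetP => x /setU1P [->|/imsetP [y _ ->]]; first by rewrite inE eqxx.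
  by rewrite inE; apply/orP; right; apply/hasP; exists y; rewrite ?mem_enum.
exists M => m Mm h Hh; apply: (Xmono hs) Mm (HM h Hh).
Qed.
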